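(* Let $(V,Q)$ be a Lorentz space, $T\in PO(Q)$, and let $W\subseteq V_t$ be a minimal $T$-invariant time-like subspace of $V_t$ (time-like: contains $v$ with $Q(v)<0$; minimal among $T$-invariant time-like subspaces). Then exactly one of the following holds: (i) $V_t=V_1$, $\dim W=1$, and $W$ is spanned by a time-like eigenvector of eigenvalue $1$; (ii) $V_t=V_1$, $\dim W\ge2$, and $\ker(T|_W-I)$ is spanned by a single light-like ($Q(v)=0$, $v\ne0$) eigenvector; (iii) $V_t=V_\lambda\oplus V_{\lambda^{-1}}$ with $\lambda\neq1$ real positive, $\dim W=2$, and $W$ is spanned by two light-like eigenvectors with eigenvalues $\lambda$ and $\lambda^{-1}$.
   Context: Lorentz space: real finite-dimensional $V$ with nondegenerate symmetric bilinear $Q$ of signature $(1,n)$; $PO(Q)$: isometries of $Q$ preserving each component of the time-like cone $\{Q(v)<0\}$. Space-time decomposition: $V_s$ is the sum of the real primary components of $T$ (spaces $\ker p(T)^{\dim V}$, $p$ irreducible factor of the characteristic polynomial) on which $Q$ is positive definite, and $V_t$ the sum of the other primary components. $V_\mu=\ker(T-\mu)^{\dim V}$. *)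

(* Defs.v *)
(* V = 'rV[R]_(n.+1) (row vectors), R a real closed field
   (covers the reals of the paper). Q is represented by a symmetric matrix,
   Q(v) = v Q v^T, and T acts on row vectors by v |-> v *m T. *)
From HB Require Import structures.
From mathcomp Require Import all_boot all_order all_algebra.
Set Implicit Arguments. Unset Strict Implicit. Unset Printing Implicit Defensive.
Import Order.TTheory GRing.Theory Num.Theory.
Local Open Scope ring_scope.

Section Lorentz.
Variables (R : rcfType) (n : nat).
Local Notation M := 'M[R]_(n.+1).
Local Notation V := 'rV[R]_(n.+1).

Definition bform (Q : M) (u v : V) : R := (u *m Q *m v^T) 0 0.
Definition qform (Q : M) (v : V) : R := bform Q v v.

Definition lorentz_form (Q : M) : Prop :=
  Q^T = Q /\
  exists P : M, P \in unitmx /\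
    P *m Q *m P^T = diag_mx (\row_(i < n.+1) (if i == ord0 then -1 else 1)).

(* time-like vectors; two time-like vectors lie in the same connected
   component of the time-like cone iff the segment joining them stays in
   the cone (the components are convex). *)
Definition timelike (Q : M) (v : V) : Prop := qform Q v < 0.
Definition lightlike (Q : M) (v : V) : Prop := v != 0 /\ qform Q v = 0.
Definition same_cone_component (Q : M) (v w : V) : Prop :=
  forall t : R, 0 <= t <= 1 -> qform Q ((1 - t) *: v + t *: w) < 0.

Definition in_PO (Q T : M) : Prop :=
  T *m Q *m T^T = Q /\
  forall v : V, timelike Q v -> same_cone_component Q v (v *m T).

Definition primary (T : M) (p : {poly R}) : M :=
  kermx (horner_mx T (p ^+ n.+1)).

Definition gen_eigenspace (T : M) (mu : R) : M := primary T ('X - mu%:P).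

Definition posdef_on (Q : M) (S : M) : Prop :=
  forall v : V, (v <= S)%MS -> v != 0 -> 0 < qform Q v.

Definition char_factor (T : M) (p : {poly R}) : Prop :=
  p \is monic /\ irreducible_poly p /\ p %| char_poly T.

(* Vt is (a matrix whose row space is) the time part V_t of T: the sum of the
   primary components of T on which Q is not positive definite. *)
Definition is_time_part (Q T : M) (Vt : M) : Prop :=
  exists ps : seq {poly R},
    uniq ps /\
    (forall p, p \in ps <-> (char_factor T p /\ ~ posdef_on Q (primary T p))) /\
    (Vt == \sum_(p <- ps) primary T p)%MS.

Definition tl_subspace (Q : M) (W : M) : Prop :=
  exists v : V, (v <= W)%MS /\ timelike Q v.
Definition T_invariant (T W : M) : Prop := stablemx W T.

Definition minimal_inv_timelike (Q T Vt W : M) : Prop :=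
  (W <= Vt)%MS /\ T_invariant T W /\ tl_subspace Q W /\
  forall U : M, (U <= Vt)%MS -> T_invariant T U -> tl_subspace Q U ->
    (U <= W)%MS -> (W <= U)%MS.

End Lorentz.

(* Main.v *)
Require Import Defs.
From HB Require Import structures.
From mathcomp Require Import all_boot all_order all_algebra.
Import Order.TTheory GRing.Theory Num.Theory.
Local Open Scope ring_scope.

Module Aux.
Set Implicit Arguments. Unset Strict Implicit. Unset Printing Implicit Defensive.

Section Gen.
Variable R : rcfType.
Implicit Types (k : nat).

Definition bf k (G : 'M[R]_k) (x y : 'rV[R]_k) : R := (x *m G *m y^T) 0 0.

Lemma bfDl k (G : 'M[R]_k) x y z : bf G (x + y) z = bf G x z + bf G y z.
Proof. by rewrite /bf !mulmxDl mxE. Qed.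
Lemma bfZl k (G : 'M[R]_k) a x z : bf G (a *: x) z = a * bf G x z.
Proof. by rewrite /bf -!scalemxAl mxE. Qed.
Lemma bfDr k (G : 'M[R]_k) x y z : bf G z (x + y) = bf G z x + bf G z y.
Proof. by rewrite /bf linearD /= mulmxDr mxE. Qed.
Lemma bfZr k (G : 'M[R]_k) a x z : bf G z (a *: x) = a * bf G z x.
Proof. by rewrite /bf linearZ /= -scalemxAr mxE. Qed.
Lemma bfNl k (G : 'M[R]_k) x z : bf G (- x) z = - bf G x z.
Proof. by rewrite -scaleN1r bfZl mulN1r. Qed.
Lemma bfNr k (G : 'M[R]_k) x z : bf G z (- x) = - bf G z x.
Proof. by rewrite -scaleN1r bfZr mulN1r. Qed.
Lemma bfBl k (G : 'M[R]_k) x y z : bf G (x - y) z = bf G x z - bf G y z.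
Proof. by rewrite bfDl bfNl. Qed.
Lemma bfBr k (G : 'M[R]_k) x y z : bf G z (x - y) = bf G z x - bf G z y.
Proof. by rewrite bfDr bfNr. Qed.
Lemma bf0l k (G : 'M[R]_k) z : bf G 0 z = 0.
Proof. by rewrite /bf !mul0mx mxE. Qed.
Lemma bf0r k (G : 'M[R]_k) z : bf G z 0 = 0.
Proof. by rewrite /bf trmx0 mulmx0 mxE. Qed.
Lemma bfC k (G : 'M[R]_k) x y : G^T = G -> bf G x y = bf G y x.
Proof.
move=> sG; rewrite /bf -{1}(trmxK (x *m G *m y^T)) mxE.
by rewrite !trmx_mul trmxK sG mulmxA.
Qed.
Lemma bfGD k (G1 G2 : 'M[R]_k) x y : bf (G1 + G2) x y = bf G1 x y + bf G2 x y.
Proof. by rewrite /bf mulmxDr mulmxDl mxE. Qed.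
Lemma bfGZ k (G : 'M[R]_k) a x y : bf (a *: G) x y = a * bf G x y.
Proof. by rewrite /bf -scalemxAr -scalemxAl mxE. Qed.

Lemma bfGN k (G : 'M[R]_k) x y : bf (- G) x y = - bf G x y.
Proof. by rewrite -scaleN1r bfGZ mulN1r. Qed.

Lemma mx11M m p (a : 'M[R]_(m,1)) (b : 'M[R]_(1,p)) i j :
  (a *m b) i j = a i 0 * b 0 j.
Proof. by rewrite mxE big_ord1. Qed.

Lemma sq_pos k (y : 'rV[R]_k) : y != 0 -> 0 < bf 1 y y.
Proof.
move=> nz; rewrite /bf mulmx1 mxE.
have [j yj] : exists j, y 0 j != 0.
  apply/existsP; move: nz; apply: contraR; rewrite negb_exists => /forallP H.
  apply/eqP/matrixP => i l; rewrite (ord1 i) mxE; exact/eqP/negPn/H.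
rewrite (bigD1 j) //= mxE ltr_pwDl ?sumr_ge0 // => [|i _]; last first.
  by rewrite mxE -expr2 sqr_ge0.
by rewrite -expr2 lt0r sqr_ge0 sqrf_eq0 yj.
Qed.

Lemma bf_skew k (N : 'M[R]_k) y : N^T = - N -> bf N y y = 0.
Proof.
move=> sN; have : bf N y y = - bf N y y.
  rewrite /bf -{1}(trmxK (y *m N *m y^T)) mxE !trmx_mul trmxK sN.
  by rewrite mulNmx mulmxN mulmxA mxE.
move/eqP; rewrite -subr_eq0 opprK -mulr2n -mulr_natl mulf_eq0 pnatr_eq0 /=.
exact/eqP.
Qed.

Definition dpoly k (P0 P1 : 'M[R]_k) : {poly R} :=
  \det (map_mx polyC P0 + 'X *: map_mx polyC P1).

Lemma dpolyE k (P0 P1 : 'M[R]_k) s : (dpoly P0 P1).[s] = \det (P0 + s *: P1).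
Proof.
rewrite /dpoly -horner_evalE -det_map_mx; congr (\det _).
apply/matrixP => i j; rewrite !mxE /= horner_evalE.
by rewrite hornerD hornerC mulrC hornerMX hornerC mulrC.
Qed.

Lemma ivt01 (f : {poly R}) : 0 < f.[0] ->
  (forall s, 0 <= s -> s < 1 -> f.[s] != 0) -> 0 <= f.[1].
Proof.
move=> f0 H; rewrite leNgt; apply/negP => f1.
have [|x /andP[x0 x1] rx] := @poly_ivt R (- f) 0 1 ler01.
  by rewrite !hornerN oppr_le0 oppr_ge0 (ltW f0) (ltW f1).
move: rx; rewrite /root hornerN oppr_eq0 => /eqP fx.
move: x1; rewrite le_eqVlt => /orP[/eqP x1|x1].
  by move: f1; rewrite -x1 fx ltxx.
by move: (H x x0 x1); rewrite fx eqxx.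
Qed.

Lemma posdef_unit k (M : 'M[R]_k) :
  (forall y, y != 0 -> 0 < bf M y y) -> M \in unitmx.
Proof.
move=> H; rewrite unitmxE unitfE; apply/negP => /det0P [v nz vM].
by have := H v nz; rewrite /bf vM mul0mx mxE ltxx.
Qed.

Lemma family_pos k (M : 'M[R]_k) s y : y != 0 -> 0 <= s -> s < 1 -> 0 <= bf M y y ->
  0 < bf (1%:M + s *: (M - 1%:M)) y y.
Proof.
move=> nz s0 s1 My.
have -> : bf (1%:M + s *: (M - 1%:M)) y y = (1 - s) * bf 1%:M y y + s * bf M y y.
  rewrite bfGD bfGZ bfGD bfGN mulrBl mul1r mulrDr mulrN.
  by rewrite addrCA addrC -!addrA.
have := sq_pos nz => yy.
apply: ltr_pwDl; first by rewrite mulr_gt0 // subr_gt0.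
by rewrite mulr_ge0.
Qed.

Lemma pd_det k (M : 'M[R]_k) : (forall y, y != 0 -> 0 < bf M y y) -> 0 < \det M.
Proof.
move=> H; have := ivt01 (f := dpoly 1%:M (M - 1%:M)).
rewrite !dpolyE scale0r addr0 det1 scale1r (addrC 1%:M (M - 1%:M)) subrK => /(_ ltr01) h.
have : 0 <= \det M.
  apply: h => s s0 s1; rewrite dpolyE -unitfE -unitmxE; apply: posdef_unit => y nz.
  by apply: family_pos => //; apply/ltW/H.
rewrite le_eqVlt => /orP[/eqP d0|//].
by have := posdef_unit H; rewrite unitmxE unitfE -d0 eqxx.
Qed.

Lemma skew_det k (N : 'M[R]_k) : N^T = - N -> 0 <= \det N.
Proof.
move=> sN; have := ivt01 (f := dpoly 1%:M (N - 1%:M)).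
rewrite !dpolyE scale0r addr0 det1 scale1r (addrC 1%:M (N - 1%:M)) subrK => /(_ ltr01); apply.
move=> s s0 s1; rewrite dpolyE -unitfE -unitmxE; apply: posdef_unit => y nz.
by apply: family_pos => //; rewrite bf_skew.
Qed.


Lemma det_rank1 k (u v : 'rV[R]_k) : \det (1%:M + u^T *m v) = 1 + (v *m u^T) 0 0.
Proof.
set X := block_mx (1%:M : 'M_1) (- v) u^T (1%:M : 'M_k).
have e1 : X = block_mx 1%:M 0 u^T 1%:M *m block_mx 1%:M (-v) 0 (1%:M + u^T *m v).
  rewrite mulmx_block !mul1mx !mulmx0 !mul0mx ?addr0 ?add0r !mulmx1 mulmxN.
  by rewrite addrCA addNr addr0.
have e2 : X = block_mx (1%:M + v *m u^T) (-v) 0 1%:M *m block_mx 1%:M 0 u^T 1%:M.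
  rewrite mulmx_block !mul1mx !mulmx0 !mul0mx ?addr0 ?add0r !mulmx1 mulNmx.
  by rewrite addrK.
have := e2; rewrite e1 => /(congr1 determinant).
rewrite !det_mulmx (det_lblock (1%:M : 'M_1)) (det_ublock (1%:M : 'M_1)).
rewrite (det_ublock (1%:M + v *m u^T)) !det1 !mul1r !mulr1 => ->.
by rewrite det_mx11 !mxE.
Qed.

Lemma quad_split k (G : 'M[R]_k) (z s : 'rV[R]_k) a : G^T = G -> bf G z s = 0 ->
  bf G (z + a *: s) (z + a *: s) = bf G z z + a * (a * bf G s s).
Proof.
move=> sG hz; rewrite bfDl !bfDr !bfZl !bfZr (bfC s z sG) hz.
by rewrite !mulr0 !addr0 add0r.
Qed.

Lemma proj_quad k (G : 'M[R]_k) (z s : 'rV[R]_k) a : G^T = G ->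
  a * bf G s s = bf G z s ->
  bf G (z - a *: s) (z - a *: s) = bf G z z - a * bf G z s.
Proof.
move=> sG h; rewrite bfBl !bfBr !bfZl !bfZr (bfC s z sG) h.
by rewrite subrr subr0.
Qed.

Lemma detneg k (G : 'M[R]_k) (s : 'rV[R]_k) : G^T = G -> bf G s s < 0 ->
  (forall y, y != 0 -> bf G y s = 0 -> 0 < bf G y y) -> \det G < 0.
Proof.
move=> sG qneg H; set q := bf G s s.
have q0 : q != 0 := ltr0_neq0 qneg.
set u := (- (2 / q)) *: s; set v := s *m G.
have dG2 : \det (G *m (1%:M + u^T *m v)) = - \det G.
  rewrite det_mulmx det_rank1 /v /u linearZ /= -scalemxAr mxE -/(bf G s s).
  rewrite -/q mulNr divfK // -[2]/(1 + 1 : R) opprD addrA subrr add0r.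
  by rewrite mulrN1.
have pos : forall y, y != 0 -> 0 < bf (G *m (1%:M + u^T *m v)) y y.
  move=> y nz; set b := bf G y s.
  have -> : bf (G *m (1%:M + u^T *m v)) y y = bf G y y - 2 / q * b * b.
    rewrite mulmxDr mulmx1 bfGD; congr (_ + _).
    have e1 : (y *m G *m u^T) 0 0 = - (2 / q) * b by rewrite -/(bf G y u) /u bfZr.
    have e2 : (v *m y^T) 0 0 = b by rewrite /v -/(bf G s y) bfC.
    rewrite /bf (_ : y *m _ *m y^T = (y *m G *m u^T) *m (v *m y^T)); last first.
      by rewrite !mulmxA.
    by rewrite mx11M e1 e2 !mulNr.
  have [b0|b0] := eqVneq b 0.
    by rewrite b0 mulr0 subr0; apply: H.
  set a := b / q; set z := y - a *: s.
  have hz : bf G z s = 0 by rewrite /z bfBl bfZl /a divfK // subrr.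
  have hy : bf G y y = bf G z z + a * b.
    have ey : y = z + a *: s by rewrite /z subrK.
    have := quad_split a sG hz; rewrite -ey => ->.
    by rewrite /a divfK.
  have Qz : 0 <= bf G z z.
    have [z0|zn] := eqVneq z 0; first by rewrite z0 bf0l.
    exact/ltW/H.
  set w := b / q * b.
  have ew : 2 / q * b * b = w + w.
    by rewrite /w -mulrDl -mulrDl -mulr2n -(mulr_natl b 2); congr (_ * _); rewrite mulrAC.
  rewrite hy /a -/w ew opprD addrA addrK.
  have wn : w < 0.
    rewrite /w mulrAC pmulr_rlt0 ?invr_lt0 //.
    by rewrite -expr2 lt0r sqr_ge0 sqrf_eq0 b0.
  by apply: ltr_wpDl => //; rewrite oppr_gt0.
by have := pd_det pos; rewrite dG2 oppr_gt0.
Qed.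

Lemma ivt_prod (f : {poly R}) a b : a <= b -> f.[a] * f.[b] <= 0 ->
  exists2 x, a <= x <= b & root f x.
Proof.
move=> ab hf; have [ha|ha] := leP f.[a] 0.
  have [hb|hb] := leP 0 f.[b]; first by apply: (poly_ivt ab); rewrite ha hb.
  exists a; first by rewrite lexx ab.
  move: hf; rewrite nmulr_lle0 // => ha'; by rewrite rootE eq_le ha ha'.
have hb : f.[b] <= 0 by move: hf; rewrite pmulr_rle0.
have [|x xab rx] := @poly_ivt R (- f) a b ab.
  by rewrite !hornerN oppr_le0 oppr_ge0 hb (ltW ha).
by exists x => //; move: rx; rewrite /root hornerN oppr_eq0.
Qed.

Lemma eig k (G A : 'M[R]_k) : G^T = G -> \det G < 0 -> A *m G *m A^T = G ->
  exists mu, exists2 y : 'rV[R]_k, y != 0 & y *m A = mu *: y.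
Proof.
move=> sG dG iso.
set N := (A + 1%:M) *m G *m (A - 1%:M)^T.
have eN : N = G *m A^T - A *m G.
  rewrite /N linearB /= trmx1 mulmxBr mulmx1 !mulmxDl !mul1mx iso.
  by rewrite [A *m G + G]addrC opprD addrA [G + G *m A^T]addrC addrK.
have sN : N^T = - N.
  by rewrite eN linearB /= !trmx_mul trmxK sG opprB.
have dN := skew_det sN.
have hp : \det (A + 1%:M) * \det (A - 1%:M) <= 0.
  by move: dN; rewrite /N !det_mulmx det_tr mulrAC nmulr_lge0.
set f := dpoly (- A) 1%:M.
have f1 : f.[1] = (-1) ^+ k * \det (A - 1%:M).
  by rewrite /f dpolyE scale1r -detZ scaleN1r opprB addrC.
have fm1 : f.[-1] = (-1) ^+ k * \det (A + 1%:M).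
  by rewrite /f dpolyE scaleN1r -detZ scaleN1r opprD.
have hf : f.[-1] * f.[1] <= 0.
  rewrite f1 fm1 mulrACA -exprD -signr_odd oddD addbb /= mul1r.
  exact: hp.
have [x _ rx] : exists2 x, -1 <= x <= 1 & root f x.
  by apply: ivt_prod => //; rewrite (le_trans _ ler01) // lerN10.
move: rx; rewrite /root /f dpolyE => /det0P [y nz yA]; exists x, y => //.
move: yA; rewrite mulmxDr mulmxN -scalemxAr mulmx1 => /eqP.
by rewrite addrC subr_eq0 => /eqP <-.
Qed.
End Gen.


Section Lor.
Variables (R : rcfType) (n : nat) (Q : 'M[R]_(n.+1)).
Hypothesis LQ : lorentz_form Q.
Local Notation V := 'rV[R]_(n.+1).

Lemma sQ : Q^T = Q. Proof. by case: LQ. Qed.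

Lemma mx11_eq0 (A : 'M[R]_1) : A 0 0 = 0 -> A = 0.
Proof. by move=> h; rewrite [A]mx11_scalar h; apply/matrixP => i j; rewrite !mxE mul0rn. Qed.

Lemma lin11 (A B : 'M[R]_1) (a b : R) : (a *: A + b *: B) 0 0 = a * A 0 0 + b * B 0 0.
Proof. by rewrite !mxE. Qed.

Lemma lor_key : exists e : 'cV[R]_(n.+1),
  forall x : V, (x *m e) 0 0 = 0 -> x != 0 -> 0 < qform Q x.
Proof.
case: LQ => _ [P [uP eP]].
exists (invmx P *m delta_mx 0 0) => x x0 nz.
set z := x *m invmx P.
have ex : x = z *m P by rewrite /z mulmxKV.
have z0 : z 0 0 = 0.
  by move: x0; rewrite mulmxA -/z -colE mxE.
clearbody z.
have zD : z *m diag_mx (\row_(i < n.+1) (if i == ord0 then -1 else 1)) = z.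
  apply/matrixP => i j; rewrite mul_mx_diag !mxE (ord1 i).
  by case: (j =P ord0) => [->|_]; rewrite ?z0 ?mul0r ?mulr1.
have -> : qform Q x = bf 1%:M z z.
  rewrite /qform /bform /bf ex trmx_mul !mulmxA -(mulmxA z) -(mulmxA z) eP.
  by rewrite zD mulmx1.
apply: sq_pos; apply/eqP => zz; move/eqP: nz; apply; by rewrite ex zz mul0mx.
Qed.

Lemma lor_time : exists t : V, qform Q t < 0.
Proof.
case: LQ => _ [P [uP eP]].
set D := diag_mx _ in eP.
exists (delta_mx 0 0 *m P).
have -> : qform Q (delta_mx 0 0 *m P) = D 0 0.
  rewrite /qform /bform trmx_mul !mulmxA -(mulmxA (delta_mx 0 0)).
  rewrite -(mulmxA (delta_mx 0 0)) eP trmx_delta -colE -rowE !mxE.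
  done.
by rewrite /D !mxE eqxx mulr1n ltrN10.
Qed.


Lemma bformE (x y : V) : bform Q x y = bf Q x y. Proof. by []. Qed.
Lemma qformE (x : V) : qform Q x = bf Q x x. Proof. by []. Qed.
Lemma bformC (x y : V) : bform Q x y = bform Q y x.
Proof. exact: (bfC x y sQ). Qed.

Lemma lor_dep (x y : V) : x != 0 -> qform Q x <= 0 -> qform Q y <= 0 ->
  bform Q x y = 0 -> exists k, y = k *: x.
Proof.
move=> nz qx qy bxy; have [e He] := lor_key.
set cx := (x *m e) 0 0; set cy := (y *m e) 0 0.
have cx0 : cx != 0.
  apply/eqP => h; have := He x h nz; by rewrite ltNge qx.
set u := cy *: x + (- cx) *: y.
have ue : (u *m e) 0 0 = 0.
  rewrite /u mulmxDl -!scalemxAl lin11 -/cx -/cy.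
  by rewrite mulNr mulrC subrr.
have hz : bf Q (cy *: x) y = 0 by rewrite bfZl -bformE bxy mulr0.
have qu : qform Q u <= 0.
  rewrite qformE /u quad_split ?sQ // bfZl bfZr.
  rewrite -!qformE !mulrA -!expr2.
  by rewrite -(addr0 0) lerD // mulr_ge0_le0 // sqr_ge0.
have u0 : u = 0.
  apply/eqP; apply/negP => /negP un; have := He u ue un; by rewrite ltNge qu.
exists (cy / cx); apply/eqP; rewrite -(can_eq (scalerK cx0)) scalerA mulrC divfK //.
by move: u0; rewrite /u scaleNr => /eqP; rewrite subr_eq0 eq_sym.
Qed.

Lemma lor_orth_pos (t x : V) : qform Q t < 0 -> bform Q x t = 0 -> x != 0 ->
  0 < qform Q x.
Proof.
move=> qt bxt nz; rewrite ltNge; apply/negP => qx.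
have [k ek] := lor_dep nz qx (ltW qt) bxt.
move: qt bxt; rewrite ek /qform !bformE bfZl !bfZr => qt bxt.
move: bxt qt; rewrite -/(bf Q x x) => /eqP; rewrite mulf_eq0 => /orP[/eqP->|/eqP->].
  by rewrite !mul0r ltxx.
by rewrite !mulr0 ltxx.
Qed.

Lemma lor_pair (t x : V) : qform Q t < 0 -> x != 0 -> qform Q x <= 0 ->
  bform Q x t != 0.
Proof.
move=> qt nz qx; apply/eqP => b0; have := lor_orth_pos qt b0 nz.
by rewrite ltNge qx.
Qed.

Lemma cone_sign (a b x : V) : same_cone_component Q a b -> x != 0 ->
  qform Q x <= 0 -> 0 < bform Q a x * bform Q b x.
Proof.
move=> cab nz qx.
have qa : qform Q a < 0.
  by have := cab 0; rewrite lexx ler01 subr0 scale1r scale0r addr0 => ->.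
have qb : qform Q b < 0.
  by have := cab 1; rewrite lexx ler01 subrr scale1r scale0r add0r => ->.
set al := bform Q a x; set be := bform Q b x.
have al0 : al != 0 by rewrite /al bformC lor_pair.
have be0 : be != 0 by rewrite /be bformC lor_pair.
rewrite ltNge; apply/negP => hp.
set f := al%:P + (be - al)%:P * 'X.
have fE : forall s, f.[s] = al + (be - al) * s.
  by move=> s; rewrite /f hornerD hornerC hornerCM hornerX.
have [tau /andP[t0 t1] rt] : exists2 tau, 0 <= tau <= 1 & root f tau.
  apply: ivt_prod; first exact: ler01.
  by rewrite !fE mulr0 addr0 mulr1 addrC subrK.
have := cab tau; rewrite t0 t1 => /(_ isT) qp.
have := lor_pair qp nz qx; rewrite bformC /bform -/(bf Q _ x) bfDl !bfZl.
rewrite -!bformE -/al -/be.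
have -> : (1 - tau) * al + tau * be = al + (be - al) * tau.
  by rewrite mulrBl mul1r mulrBl (mulrC be) (mulrC al) addrA addrAC.
by move: rt; rewrite rootE fE => ->.
Qed.

End Lor.

Section Iso.
Variables (R : rcfType) (n : nat) (Q T : 'M[R]_(n.+1)).
Hypothesis LQ : lorentz_form Q.
Hypothesis PO : in_PO Q T.
Local Notation V := 'rV[R]_(n.+1).

Lemma iso_bf (u v : V) : bform Q (u *m T) (v *m T) = bform Q u v.
Proof.
case: PO => iso _.
by rewrite /bform trmx_mul !mulmxA -(mulmxA u) -(mulmxA u) iso.
Qed.

Lemma iso_q (u : V) : qform Q (u *m T) = qform Q u.
Proof. exact: iso_bf. Qed.

Lemma ev_pos (x : V) mu : x != 0 -> qform Q x <= 0 -> x *m T = mu *: x -> 0 < mu.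
Proof.
move=> nz qx ex; have [t qt] := lor_time LQ.
case: PO => _ cone.
have := cone_sign LQ (cone t qt) nz qx.
have := iso_bf t x; rewrite ex bformE bfZr -bformE => <-.
rewrite -mulrA -expr2; set s := _ ^+ 2.
move=> h; rewrite ltNge; apply/negP => m0; move: h.
by rewrite ltNge mulr_le0_ge0 // /s sqr_ge0.
Qed.

End Iso.


Lemma mx11_eqE (R : fieldType) (A : 'M[R]_1) : (A == 0) = (A 0 0 == 0).
Proof.
apply/eqP/eqP => [->|h]; first by rewrite mxE.
by rewrite [A]mx11_scalar h; apply/matrixP => i j; rewrite !mxE mul0rn.
Qed.

Section WStruct.
Variables (R : rcfType) (n : nat) (Q T Vt W : 'M[R]_(n.+1)).
Hypothesis LQ : lorentz_form Q.
Hypothesis PO : in_PO Q T.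
Hypothesis MIN : minimal_inv_timelike Q T Vt W.
Local Notation V := 'rV[R]_(n.+1).

Lemma sub_orth (y x : V) : (y <= kermx (Q *m x^T))%MS = (bform Q y x == 0).
Proof. by rewrite sub_kermx mulmxA mx11_eqE. Qed.

Lemma WT (x : V) : (x <= W)%MS -> (x *m T <= W)%MS.
Proof.
case: MIN => _ [st _] xW; apply: submx_trans st.
exact: submxMr.
Qed.

Lemma stable_rows m (U : 'M[R]_(m, n.+1)) :
  (forall y : V, (y <= U)%MS -> (y *m T <= U)%MS) -> (U *m T <= U)%MS.
Proof. by move=> H; apply/row_subP => i; rewrite row_mul; apply/H/row_sub. Qed.

Lemma min_gen m (U : 'M[R]_(m, n.+1)) : (U *m T <= U)%MS ->
  (exists v : V, (v <= U)%MS /\ timelike Q v) -> (U <= W)%MS -> (W <= U)%MS.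
Proof.
case: MIN => sWV [_ [_ Hmin]] sU [v [vU tv]] UW.
rewrite -(genmxE U); apply: Hmin.
- by rewrite genmxE (submx_trans UW).
- by rewrite /T_invariant (eqmxMr T (genmxE U)) !genmxE.
- by exists v; rewrite genmxE.
- by rewrite genmxE.
Qed.

Lemma tlW : exists t : V, (t <= W)%MS /\ qform Q t < 0.
Proof. by case: MIN => _ [_ [[t [tW tt]] _]]; exists t. Qed.

Lemma S1 (x : V) mu : (x <= W)%MS -> x *m T = mu *: x -> qform Q x < 0 -> (W <= x)%MS.
Proof.
move=> xW ex qx; apply: min_gen => //.
  by rewrite ex scalemx_sub.
by exists x.
Qed.

Lemma S2 (x : V) mu : (x <= W)%MS -> x *m T = mu *: x -> 0 < qform Q x -> False.
Proof.
move=> xW ex qx.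
have mu0 : mu != 0.
  apply/eqP => m0; have := iso_q PO x; rewrite ex m0 scale0r /qform /bform.
  by rewrite !mul0mx mxE => h; move: qx; rewrite /qform /bform -h ltxx.
set U := (W :&: kermx (Q *m x^T))%MS.
have inU : forall y : V, (y <= U)%MS = (y <= W)%MS && (bform Q y x == 0).
  by move=> y; rewrite sub_capmx sub_orth.
have [t [tW qt]] := tlW.
have xU : (W <= U)%MS.
  apply: min_gen; last exact: capmxSl.
    apply: stable_rows => y; rewrite !inU => /andP[yW /eqP byx].
    rewrite WT //=; apply/eqP.
    have := iso_bf PO y x; rewrite ex byx bformE bfZr -bformE => /eqP.
    by rewrite mulf_eq0 (negbTE mu0) => /eqP.
  exists (t - (bform Q t x / qform Q x) *: x); split.
    rewrite inU (addmx_sub tW) ?eqmx_opp ?scalemx_sub //=.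
    by rewrite bformE bfBl bfZl -!bformE divfK ?subrr // lt0r_neq0.
  rewrite /timelike qformE proj_quad ?sQ //; last first.
    by rewrite -/(qform Q x) -/(bform Q t x) divfK // lt0r_neq0.
  rewrite -/(qform Q t) -/(bform Q t x); apply: le_lt_trans qt; rewrite gerBl.
  rewrite mulrAC divr_ge0 //; last exact: ltW.
  by rewrite -/(bform Q t x) -expr2 sqr_ge0.
have := submx_trans xW xU; rewrite inU => /andP[_ /eqP h].
by move: qx; rewrite /qform h ltxx.
Qed.


Lemma eigW : exists (x : V) mu, [/\ x != 0, (x <= W)%MS & x *m T = mu *: x].
Proof.
set r := \rank W; set B := row_base W.
have sB : (B *m T <= B)%MS.
  by case: MIN => _ [st _]; rewrite /B stablemx_row_base.
have rB : row_free B := row_base_free W.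
have eB : (B :=: W)%MS := eq_row_base W.
clearbody B.
set A := B *m T *m pinvmx B.
have AB : A *m B = B *m T by rewrite /A mulmxKpV.
set G := B *m Q *m B^T.
have bfG : forall y z : 'rV_r, bf G y z = bform Q (y *m B) (z *m B).
  by move=> y z; rewrite /bf /bform /G trmx_mul !mulmxA.
have sG : G^T = G by rewrite /G !trmx_mul trmxK sQ // mulmxA.
have iso : A *m G *m A^T = G.
  rewrite /G !mulmxA AB -!mulmxA -trmx_mul AB trmx_mul !mulmxA.
  by case: PO => h _; rewrite -(mulmxA B T) -(mulmxA B) h.
have [t [tW qt]] := tlW.
have [s es] : exists s, t = s *m B.
  by apply/submxP; rewrite eB.
have nzB : forall y : 'rV_r, y != 0 -> y *m B != 0.
  by move=> y; rewrite mulmx_free_eq0.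
have dG : \det G < 0.
  apply: (detneg (s:=s) sG).
    by rewrite bfG -es.
  move=> y nz; rewrite !bfG -es => b0.
  exact: (lor_orth_pos LQ qt b0 (nzB _ nz)).
have [mu [y nz yA]] := eig sG dG iso.
exists (y *m B), mu; split.
- exact: nzB.
- by rewrite -eB submxMl.
- by rewrite -mulmxA -AB mulmxA yA scalemxAl.
Qed.


Lemma qformZ (z : V) k : qform Q (k *: z) = k * (k * qform Q z).
Proof. by rewrite qformE bfZl bfZr. Qed.

Lemma scal_light (x z : V) k : x = k *: z -> qform Q x = 0 -> qform Q z < 0 -> x = 0.
Proof.
move=> ->; rewrite qformZ => /eqP; rewrite !mulf_eq0 orbA orbb => /orP[/eqP->|/eqP h].
  by rewrite scale0r.
by rewrite h ltxx.
Qed.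

Lemma no_tl_eig (x z : V) mu : (x <= W)%MS -> x != 0 -> qform Q x = 0 ->
  (z <= W)%MS -> z *m T = mu *: z -> qform Q z < 0 -> False.
Proof.
move=> xW nz qx zW ez qz; have := submx_trans xW (S1 zW ez qz).
case/sub_rVP => k ek; have := scal_light ek qx qz.
by move/eqP; rewrite (negbTE nz).
Qed.

Lemma two_rank (x t : V) : (x <= W)%MS -> x != 0 -> qform Q x = 0 ->
  (t <= W)%MS -> qform Q t < 0 -> (2 <= \rank W)%N.
Proof.
move=> xW nz qx tW qt; rewrite leqNgt; apply/negP => r1.
have t0 : t != 0 by apply/eqP => t0; move: qt; rewrite t0 qformE bf0l ltxx.
case: (mxrank_leqif_sup tW) => _ eq.
have Wt : (W <= t)%MS.
  rewrite -eq eqn_leq mxrankS //= rank_rV t0.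
  by rewrite -ltnS.
have := submx_trans xW Wt; case/sub_rVP => k ek.
have := scal_light ek qx qt; by move/eqP; rewrite (negbTE nz).
Qed.


Lemma eq_le_ (a : R) : a = 0 -> a <= 0.
Proof. by move->. Qed.

Lemma pair_tl (x y : V) : qform Q x = 0 -> qform Q y = 0 -> bform Q x y != 0 ->
  qform Q (x + (- bform Q x y) *: y) < 0.
Proof.
move=> qx qy bxy; set c := - bform Q x y.
rewrite qformE bfDl !bfDr !bfZl !bfZr -[bf Q x x]/(qform Q x) -[bf Q y y]/(qform Q y).
rewrite -[bf Q x y]/(bform Q x y) -[bf Q y x]/(bform Q y x) qx qy.
rewrite (bformC LQ y x) !mulr0 !add0r !addr0 /c mulNr -opprD oppr_lt0.
by rewrite -mulr2n mulrn_wgt0 // -expr2 lt0r sqr_ge0 sqrf_eq0 bxy.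
Qed.

Lemma fixed_in (x y : V) : (x <= W)%MS -> x != 0 -> qform Q x = 0 -> x *m T = x ->
  (y <= W)%MS -> y *m T = y -> (y <= x)%MS.
Proof.
move=> xW nz qx ex yW ey.
have [->|ny] := eqVneq y 0; first exact: sub0mx.
have ey' : y *m T = 1 *: y by rewrite scale1r.
case: (ltgtP (qform Q y) 0) => qy.
- by case: (no_tl_eig xW nz qx yW ey' qy).
- by case: (S2 yW ey' qy).
have [bxy|bxy] := eqVneq (bform Q x y) 0.
  have [k ->] := lor_dep LQ nz (eq_le_ qx) (eq_le_ qy) bxy.
  by rewrite scalemx_sub.
exfalso; set c := - bform Q x y.
set z := x + c *: y.
have zW : (z <= W)%MS by rewrite addmx_sub // scalemx_sub.
have ez : z *m T = 1 *: z by rewrite scale1r mulmxDl -scalemxAl ex ey.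
have qz : qform Q z < 0.
  rewrite /z qformE bfDl !bfDr !bfZl !bfZr -[bf Q x x]/(qform Q x) -[bf Q y y]/(qform Q y) -[bf Q x y]/(bform Q x y) -[bf Q y x]/(bform Q y x) qx qy.
  rewrite (bformC LQ y x) !mulr0 !add0r !addr0 /c mulNr -opprD oppr_lt0.
  by rewrite -mulr2n mulrn_wgt0 // -expr2 lt0r sqr_ge0 sqrf_eq0 bxy.
exact: (no_tl_eig xW nz qx zW ez qz).
Qed.


Lemma sqr1_pos (m : R) : 0 < m -> m * m = 1 -> m = 1.
Proof.
move=> mp /eqP; rewrite -expr2 sqrf_eq1 => /orP[/eqP //|/eqP m1].
by move: mp; rewrite m1 ltr0N1.
Qed.

Lemma W_cases :
 (exists v : V, timelike Q v /\ v *m T = v /\ (W == v)%MS)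
 \/ (exists v : V, lightlike Q v /\ v *m T = v /\
       ((W :&: kermx (T - 1%:M)) == v)%MS /\ (2 <= \rank W)%N)
 \/ (exists lam (u w : V), 0 < lam /\ lam != 1 /\ lightlike Q u /\ lightlike Q w /\
       u *m T = lam *: u /\ w *m T = lam^-1 *: w /\ (W == col_mx u w)%MS /\
       \rank W = 2%N).
Proof.
have [x [mu [nz xW ex]]] := eigW.
have [t [tW qt]] := tlW.
have qmu : mu * (mu * qform Q x) = qform Q x by rewrite -qformZ -ex iso_q.
case: (ltgtP (qform Q x) 0) => qx.
- left; have mp := ev_pos LQ PO nz (ltW qx) ex.
  have m1 : mu = 1.
    apply: sqr1_pos => //; apply: (mulIf (ltr0_neq0 qx)).
    by rewrite -mulrA qmu mul1r.
  exists x; split => //; split; first by rewrite ex m1 scale1r.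
  by rewrite (S1 xW ex qx) xW.
- by case: (S2 xW ex qx).
have mp := ev_pos LQ PO nz (eq_le_ qx) ex.
have [m1|m1] := eqVneq mu 1.
  right; left; exists x; split; first by split.
  have ex1 : x *m T = x by rewrite ex m1 scale1r.
  split => //; split; last exact: (two_rank xW nz qx tW qt).
  apply/andP; split.
    apply/row_subP => i; set y := row i _.
    have yW : (y <= W)%MS by apply: submx_trans (row_sub _ _) (capmxSl _ _).
    have yK : (y <= kermx (T - 1%:M))%MS.
      by apply: submx_trans (row_sub _ _) (capmxSr _ _).
    apply: (fixed_in xW nz qx ex1 yW).
    move/sub_kermxP: yK; rewrite mulmxBr mulmx1 => /eqP.
    by rewrite subr_eq0 => /eqP.
  rewrite sub_capmx xW /=; apply/sub_kermxP.
  by rewrite mulmxBr mulmx1 ex1 subrr.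
right; right.
have mu0 : mu != 0 by rewrite gt_eqF.
set c := mu^-1.
have cp : 0 < c by rewrite invr_gt0.
have c1 : c != 1 by rewrite invr_eq1.
have bT : forall y : V, bform Q (y *m T) x = c * bform Q y x.
  move=> y; have := iso_bf PO y x; rewrite ex bformE bfZr -bformE => <-.
  by rewrite mulrA mulVf // mul1r.
set H := (W :&: kermx (Q *m x^T))%MS.
have img : (W *m (T - c%:M) <= H)%MS.
  apply/row_subP => i; rewrite row_mul; set y := row i W.
  have yW : (y <= W)%MS by apply: row_sub.
  rewrite sub_capmx sub_orth mulmxBr mul_mx_scalar (addmx_sub (WT yW)) /=.
    by rewrite bformE bfBl bfZl -!bformE bT subrr.
  by rewrite eqmx_opp scalemx_sub.
have rH : (\rank H < \rank W)%N.
  case: (mxrank_leqif_sup (capmxSl W (kermx (Q *m x^T)))) => le eq.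
  rewrite ltn_neqAle le andbT eq; apply/negP => WH.
  have := submx_trans tW WH; rewrite sub_capmx sub_orth => /andP[_].
  by rewrite (bformC LQ) (negbTE (lor_pair LQ qt nz (eq_le_ qx))).
have rK : (0 < \rank (W :&: kermx (T - c%:M)))%N.
  have := mxrank_mul_ker W (T - c%:M); have := mxrankS img.
  move=> h1 h2; rewrite lt0n; apply/eqP => h0; move: h2; rewrite h0 addn0 => h2.
  by move: rH; rewrite -h2 ltnNge h1.
have [w wWK nw] : exists2 w : V, (w <= W :&: kermx (T - c%:M))%MS & w != 0.
  by apply/rowV0Pn; rewrite -mxrank_eq0 -lt0n.
have wW : (w <= W)%MS by apply: submx_trans wWK (capmxSl _ _).
have ew : w *m T = c *: w.
  have := submx_trans wWK (capmxSr _ _); move/sub_kermxP.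
  by rewrite mulmxBr mul_mx_scalar => /eqP; rewrite subr_eq0 => /eqP.
have qw : qform Q w = 0.
  have h := iso_q PO w; rewrite ew qformZ mulrA in h.
  apply/eqP; move/eqP: h; rewrite -subr_eq0 -{2}(mul1r (qform Q w)) -mulrBl.
  rewrite mulf_eq0 subr_eq0 => /orP[/eqP h|//].
  by move: c1; rewrite (sqr1_pos cp h) eqxx.
have bxw : bform Q x w != 0.
  apply/eqP => b0; have [k ek] := lor_dep LQ nz (eq_le_ qx) (eq_le_ qw) b0.
  move: ew; rewrite ek -scalemxAl ex !scalerA mulrC => /eqP.
  rewrite -subr_eq0 -scalerBl scaler_eq0 (negbTE nz) orbF subr_eq0 => /eqP h.
  have k0 : k = 0.
    apply/eqP; apply/negP => /negP k0; move/(mulIf k0): h => h.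
    move/eqP: m1; apply; apply: sqr1_pos => //.
    by rewrite {1}h mulVf.
  by move: nw; rewrite ek k0 scale0r eqxx.
set U := col_mx x w.
have := submx_refl U; rewrite /U col_mx_sub => /andP[xU wU].
have WU : (W <= U)%MS.
  apply: min_gen.
  - rewrite /U mul_col_mx col_mx_sub ex ew.
    by rewrite !scalemx_sub.
  - exists (x + (- bform Q x w) *: w); split.
      by rewrite (addmx_sub xU) // scalemx_sub.
    exact: pair_tl.
  - by rewrite /U col_mx_sub xW wW.
have UW : (U <= W)%MS by rewrite /U col_mx_sub xW wW.
exists mu, x, w; do 6!(split => //).
have eWU : (W == U)%MS by rewrite WU UW.
split => //; apply/eqP; rewrite eqn_leq (two_rank xW nz qx tW qt) andbT.
by rewrite (eqmx_rank eWU) (leq_trans (rank_leq_row _)).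
Qed.

End WStruct.


Section Prim.
Variables (R : rcfType) (n : nat) (Q T : 'M[R]_(n.+1)).
Hypothesis LQ : lorentz_form Q.
Hypothesis PO : in_PO Q T.
Local Notation V := 'rV[R]_(n.+1).

Lemma hm_eig (x : V) mu f : x *m T = mu *: x -> x *m horner_mx T f = f.[mu] *: x.
Proof.
move=> ex; elim/poly_ind: f => [|p c IH].
  by rewrite rmorph0 mulmx0 horner0 scale0r.
rewrite rmorphD rmorphM /= horner_mx_X horner_mx_C mulmxDr mulmxA IH.
by rewrite -scalemxAl ex scalerA mul_mx_scalar hornerMXaddC scalerDl.
Qed.

Lemma orth_poly (x y : V) mu f : mu != 0 -> x *m T = mu *: x ->
  bform Q (y *m horner_mx T f) x = f.[mu^-1] * bform Q y x.
Proof.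
move=> mu0 ex.
have bT : forall y : V, bform Q (y *m T) x = mu^-1 * bform Q y x.
  move=> z; have := iso_bf PO z x; rewrite ex bformE bfZr -bformE => <-.
  by rewrite mulrA mulVf // mul1r.
elim/poly_ind: f => [|p c IH].
  by rewrite rmorph0 mulmx0 horner0 mul0r bformE bf0l.
rewrite rmorphD rmorphM /= horner_mx_X horner_mx_C mulmxDr mulmxA mul_mx_scalar.
rewrite bformE bfDl bfZl -!bformE bT IH hornerMXaddC mulrDl.
by rewrite mulrA (mulrC _ (p.[_])).
Qed.

Lemma in_primaryP (y : V) p :
  reflect (y *m horner_mx T (p ^+ n.+1) = 0) (y <= primary T p)%MS.
Proof. exact: sub_kermxP. Qed.

Lemma eig_primary (x : V) mu : x *m T = mu *: x -> (x <= gen_eigenspace T mu)%MS.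
Proof.
move=> ex; apply/in_primaryP; rewrite (hm_eig _ ex) horner_exp hornerXsubC subrr.
by rewrite expr0n /= scale0r.
Qed.

Lemma char_factor_eig (x : V) mu : x != 0 -> x *m T = mu *: x ->
  char_factor T ('X - mu%:P).
Proof.
move=> nz ex; split; first exact: monicXsubC.
split; first exact: irredp_XsubC.
rewrite dvdp_XsubCl -eigenvalue_root_char; apply/eigenvalueP.
by exists x.
Qed.

Lemma irr_root (p : {poly R}) a : p \is monic -> irreducible_poly p -> p.[a] = 0 ->
  p = 'X - a%:P.
Proof.
move=> mp ip pa.
have d : ('X - a%:P) %| p by rewrite dvdp_XsubCl; apply/rootP.
case: (irredp_XsubCP ip d) => [h|h].
  by move: (eqp_size h); rewrite size_XsubC size_poly1.
by apply/eqP; rewrite eq_sym -eqp_monic // monicXsubC.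
Qed.

Lemma uniq_single (T0 : eqType) (s : seq T0) a : uniq s -> (forall y, y \in s -> y = a) ->
  a \in s -> s = [:: a].
Proof.
case: s => [//|b s] /= /andP[bs us] H _.
have eb : b = a by apply: H; rewrite inE eqxx.
case: s bs us H => [|c s] bs _ H; first by rewrite eb.
have ec : c = a by apply: H; rewrite !inE eqxx orbT.
by move: bs; rewrite inE eb ec eqxx.
Qed.


Lemma ps_single Vt (x : V) : x != 0 -> qform Q x <= 0 -> x *m T = x ->
  is_time_part Q T Vt -> (Vt == gen_eigenspace T 1)%MS.
Proof.
move=> nz qx ex [ps [u [mem eV]]].
have ex1 : x *m T = 1 *: x by rewrite scale1r.
have inX : 'X - 1%:P \in ps.
  apply/mem; split; first exact: (char_factor_eig nz ex1).
  by move=> pd; have := pd x (eig_primary ex1) nz; rewrite ltNge qx.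
have all1 : forall p, p \in ps -> p = 'X - 1%:P.
  move=> p /mem [[mp [ip _]] npd].
  have [p1|p1] := eqVneq p.[1] 0; first exact: irr_root.
  exfalso; apply: npd => v vP nv.
  have /in_primaryP vh := vP.
  rewrite ltNge; apply/negP => qv.
  have bv : bform Q v x = 0.
    have := orth_poly v (p ^+ n.+1) (oner_neq0 R) ex1.
    rewrite vh bformE bf0l invr1 horner_exp => /esym/eqP.
    by rewrite mulf_eq0 expf_eq0 (negbTE p1) andbF /= => /eqP.
  have [k ek] := lor_dep LQ nz qx qv (etrans (bformC LQ x v) bv).
  move: vh; rewrite ek -scalemxAl (hm_eig _ ex1) scalerA => /eqP.
  rewrite scaler_eq0 (negbTE nz) orbF mulf_eq0 horner_exp expf_eq0 (negbTE p1).
  rewrite andbF orbF => /eqP k0.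
  by move: nv; rewrite ek k0 scale0r eqxx.
by rewrite (uniq_single u all1 inX) big_seq1 in eV.
Qed.


Lemma gen_direct a b : a != b -> mxdirect (gen_eigenspace T a + gen_eigenspace T b).
Proof.
move=> ab; apply/mxdirect_addsP; apply/eqP; rewrite -submx0; apply/row_subP => i.
set y := row i _.
have ya : (y <= gen_eigenspace T a)%MS by apply: submx_trans (row_sub _ _) (capmxSl _ _).
have yb : (y <= gen_eigenspace T b)%MS by apply: submx_trans (row_sub _ _) (capmxSr _ _).
move/in_primaryP: ya => ya; move/in_primaryP: yb => yb.
have cop : coprimep (('X - a%:P) ^+ n.+1) (('X - b%:P) ^+ n.+1).
  by rewrite coprimep_expl // coprimep_expr // coprimep_XsubC root_XsubC eq_sym.
case/Bezout_eq1_coprimepP: cop => [[u1 u2]] /= e.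
have : y = y *m horner_mx T (u1 * ('X - a%:P) ^+ n.+1 + u2 * ('X - b%:P) ^+ n.+1).
  by rewrite e rmorph1 mulmx1.
rewrite (mulrC u1) (mulrC u2) rmorphD !rmorphM /= mulmxDr !mulmxA ya yb !mul0mx addr0.
by move->; rewrite sub0mx.
Qed.

Lemma not_V1 (Vt W : 'M[R]_(n.+1)) lam (u : V) : (W <= Vt)%MS -> (Vt == gen_eigenspace T 1)%MS ->
  (u <= W)%MS -> u != 0 -> u *m T = lam *: u -> lam != 1 -> False.
Proof.
move=> WV /andP[VV1 _] uW nu eu l1.
have /in_primaryP := submx_trans uW (submx_trans WV VV1).
rewrite (hm_eig _ eu) horner_exp hornerXsubC => /eqP.
by rewrite scaler_eq0 (negbTE nu) orbF expf_eq0 subr_eq0 (negbTE l1) andbF.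
Qed.

Lemma eig_indep (u w : V) lam : lam != 0 -> lam * lam != 1 -> u != 0 -> w != 0 ->
  qform Q u = 0 -> qform Q w = 0 -> u *m T = lam *: u -> w *m T = lam^-1 *: w ->
  bform Q u w != 0.
Proof.
move=> l0 ll nu nw qu qw eu ew; apply/eqP => b0.
have [k ek] := lor_dep LQ nu (eq_le_ qu) (eq_le_ qw) b0.
move: ew; rewrite ek -scalemxAl eu !scalerA mulrC => /eqP.
rewrite -subr_eq0 -scalerBl scaler_eq0 (negbTE nu) orbF subr_eq0 => /eqP h.
have k0 : k = 0.
  apply/eqP; apply/negP => /negP k0; move/(mulIf k0): h => h.
  by move: ll; rewrite {1}h mulVf ?eqxx.
by move: nw; rewrite ek k0 scale0r eqxx.
Qed.

Lemma ps_pair Vt lam (u w : V) : 0 < lam -> lam != 1 -> lightlike Q u ->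
  lightlike Q w -> u *m T = lam *: u -> w *m T = lam^-1 *: w ->
  is_time_part Q T Vt ->
  (Vt == gen_eigenspace T lam + gen_eigenspace T lam^-1)%MS.
Proof.
move=> lp l1 [nu qu] [nw qw] eu ew [ps [uq [mem eV]]].
set a := 'X - lam%:P; set b := 'X - lam^-1%:P.
have l0 : lam != 0 by rewrite gt_eqF.
have ll : lam * lam != 1.
  by apply: contra l1 => /eqP h; apply/eqP; apply: sqr1_pos.
have lli : lam != lam^-1.
  by apply: contra ll => /eqP h; rewrite {2}h mulfV.
have ab : a != b.
  apply: contra lli => /eqP h; have := congr1 (fun p => p.[lam]) h.
  rewrite /a /b !hornerXsubC subrr => /esym/eqP; rewrite subr_eq0 eq_sym.
  by [].
have bxw := eig_indep l0 ll nu nw qu qw eu ew.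
have inA : a \in ps.
  apply/mem; split; first exact: (char_factor_eig nu eu).
  by move=> pd; have := pd u (eig_primary eu) nu; rewrite qu ltxx.
have inB : b \in ps.
  apply/mem; split; first exact: (char_factor_eig nw ew).
  by move=> pd; have := pd w (eig_primary ew) nw; rewrite qw ltxx.
have allp : forall p, p \in ps -> p = a \/ p = b.
  move=> p /mem [[mp [ip _]] npd].
  have [pa|pa] := eqVneq p.[lam] 0; first by left; exact: irr_root.
  have [pb|pb] := eqVneq p.[lam^-1] 0; first by right; exact: irr_root.
  exfalso; apply: npd => v vP nv.
  have /in_primaryP vh := vP.
  rewrite ltNge; apply/negP => qv.
  have bu : bform Q v u = 0.
    have := orth_poly v (p ^+ n.+1) l0 eu.
    rewrite vh bformE bf0l horner_exp => /esym/eqP.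
    by rewrite mulf_eq0 expf_eq0 (negbTE pb) andbF /= => /eqP.
  have bw : bform Q v w = 0.
    have := orth_poly v (p ^+ n.+1) (invr_neq0 l0) ew.
    rewrite vh bformE bf0l horner_exp invrK => /esym/eqP.
    by rewrite mulf_eq0 expf_eq0 (negbTE pa) andbF /= => /eqP.
  have qz := pair_tl LQ qu qw bxw.
  have bz : bform Q v (u + (- bform Q u w) *: w) = 0.
    by rewrite bformE bfDr bfZr -!bformE bu bw mulr0 addr0.
  by have := lor_orth_pos LQ qz bz nv; rewrite ltNge qv.
have pe : perm_eq ps [:: a; b].
  apply: uniq_perm => //=; first by rewrite inE ab.
  move=> p; rewrite !inE; apply/idP/idP.
    by case/allp => ->; rewrite eqxx ?orbT.
  by case/orP => /eqP ->.
by rewrite (perm_big _ pe) big_cons big_seq1 in eV.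
Qed.

End Prim.


End Aux.
Import Aux.

Theorem theorem2p11 (R : rcfType) (n : nat) (Q T Vt W : 'M[R]_(n.+1)) :
  lorentz_form Q -> in_PO Q T -> is_time_part Q T Vt ->
  minimal_inv_timelike Q T Vt W ->
  let case1 :=
    (Vt == gen_eigenspace T 1)%MS /\ \rank W = 1%N /\
    exists v : 'rV[R]_(n.+1),
      timelike Q v /\ v *m T = v /\ (W == v)%MS in
  let case2 :=
    (Vt == gen_eigenspace T 1)%MS /\ (2 <= \rank W)%N /\
    exists v : 'rV[R]_(n.+1),
      lightlike Q v /\ v *m T = v /\
      ((W :&: kermx (T - 1%:M)) == v)%MS in
  let case3 :=
    exists lam : R, 0 < lam /\ lam != 1 /\
      (Vt == gen_eigenspace T lam + gen_eigenspace T lam^-1)%MS /\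
      mxdirect (gen_eigenspace T lam + gen_eigenspace T lam^-1) /\
      \rank W = 2%N /\
      exists u w : 'rV[R]_(n.+1),
        lightlike Q u /\ lightlike Q w /\
        u *m T = lam *: u /\ w *m T = lam^-1 *: w /\
        (W == col_mx u w)%MS in
  (case1 \/ case2 \/ case3) /\
  ~ (case1 /\ case2) /\ ~ (case1 /\ case3) /\ ~ (case2 /\ case3).
Proof.
move=> LQ PO TP MIN; cbv zeta.
have WVt : (W <= Vt)%MS by case: MIN.
split.
  case: (W_cases LQ PO MIN) =>
    [[v [tv [ev eW]]]|[[v [lv [ev [eK r2]]]]|[lam [u [w [lp [l1 [lu [lw [eu [ew [eW r2]]]]]]]]]]]].
  - left.
    have nv : v != 0.
      by apply/eqP => v0; move: tv; rewrite /timelike v0 qformE bf0l ltxx.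
    split; first exact: (ps_single LQ PO nv (ltW tv) ev TP).
    split; last by exists v.
    by rewrite (eqmx_rank eW) rank_rV nv.
  - right; left.
    case: (lv) => nv qv.
    split; first exact: (ps_single LQ PO nv (eq_le_ qv) ev TP).
    split => //; by exists v.
  - right; right; exists lam; split => //; split => //.
    split; first exact: (ps_pair LQ PO lp l1 lu lw eu ew TP).
    split.
      apply: gen_direct; apply: contra l1 => /eqP h; apply/eqP.
      by apply: sqr1_pos => //; rewrite {2}h mulfV // gt_eqF.
    split => //; by exists u, w.
split.
  by move=> [[_ [r1 _]] [_ [r2 _]]]; move: r2; rewrite r1.
split.
  by move=> [[_ [r1 _]] [lam [_ [_ [_ [_ [r2 _]]]]]]]; move: r2; rewrite r1.
move=> [[eV1 _] [lam [lp [l1 [_ [_ [_ [u [w [[nu _] [_ [eu [_ eW]]]]]]]]]]]]].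
have uW : (u <= W)%MS.
  by case/andP: eW => _; rewrite col_mx_sub => /andP[].
exact: (not_V1 WVt eV1 uW nu eu l1).
Qed.
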